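(* Let $\varepsilon\in[0,1/6]$ and let $\alpha,\beta,\gamma\in\mathbb{C}$ satisfy $|\alpha|,|\beta|,|\gamma|\in[1-\varepsilon,1]$ and $|\alpha+\beta+\gamma|\le\varepsilon$. Then for each angle $\theta\in\{\arg(\alpha)-\arg(\beta),\ \arg(\beta)-\arg(\gamma),\ \arg(\gamma)-\arg(\alpha)\}$, interpreted (modulo $2\pi$) as an element of $[0,2\pi)$, one has $|\theta-2\pi/3|\le6\varepsilon$ or $|\theta-4\pi/3|\le6\varepsilon$. *)

(* Defs.v *)
From Stdlib Require Import Reals ZArith.
From Coquelicot Require Import Coquelicot.
Open Scope R_scope.

Definition is_arg (z : C) (a : R) : Prop :=
  z = ((Cmod z * cos a)%R, (Cmod z * sin a)%R).

Definition reduced_angle (x th : R) : Prop :=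
  0 <= th < 2 * PI /\ exists k : Z, th = x + 2 * PI * IZR k.

(* Main.v *)
Require Import Defs.
From Stdlib Require Import Reals ZArith Lra Lia Psatz.
From Coquelicot Require Import Coquelicot.
Open Scope R_scope.

Lemma sin_lb3 t : 0 <= t <= PI -> t - t^3/6 <= sin t.
Proof.
  intros [h1 h2]. destruct (sin_bound t 0 h1 h2) as [H _].
  unfold sin_approx, sin_term in H. simpl in H. lra.
Qed.

Lemma PI_gt3 : 3 < PI.
Proof. pose proof PI2_3_2. lra. Qed.

Lemma cos_Z x (k : Z) : cos (x + 2 * PI * IZR k) = cos x.
Proof.
  destruct (Z_le_gt_dec 0 k) as [h|h].
  - destruct (Z_of_nat_complete _ h) as [n ->].
    rewrite <- INR_IZR_INZ. replace (x + 2*PI*INR n) with (x + 2*INR n*PI) by ring.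
    apply cos_period.
  - assert (h' : (0 <= - k)%Z) by lia.
    destruct (Z_of_nat_complete _ h') as [n hn].
    assert (IZR k = - INR n) by (rewrite INR_IZR_INZ, <- hn, opp_IZR; ring).
    rewrite H. rewrite <- (cos_period (x + 2*PI*(- INR n)) n). f_equal. ring.
Qed.

Lemma sqrt3_bound : 8/5 <= sqrt 3.
Proof.
  rewrite <- (sqrt_Rsqr (8/5)) by lra. apply sqrt_le_1_alt. unfold Rsqr. lra.
Qed.

Lemma Rabs_le_inv' x y : Rabs x <= y -> -y <= x <= y.
Proof. intros h. pose proof (RRle_abs x). pose proof (RRle_abs (-x)). rewrite Rabs_Ropp in H0. lra. Qed.

Lemma cos_lb2 t : -1 <= t <= 1 -> 1 - t^2/2 <= cos t.
Proof.
  intros h. pose proof PI_gt3 as HP. destruct (cos_bound t 0 ltac:(lra) ltac:(lra)) as [H _].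
  unfold cos_approx, cos_term in H. simpl in H. lra.
Qed.

Lemma cos_near th t : 0 <= t <= 1 -> 0 <= th <= PI ->
  -(2*t/5) <= cos th + 1/2 <= 2*t/3 -> Rabs (th - 2*PI/3) <= t.
Proof.
  intros Ht Hth Hc. pose proof PI_gt3. pose proof sqrt3_bound.
  pose proof (sin_lb3 t ltac:(lra)).
  assert (t^3 <= t) by (simpl; nra).
  assert (t^2 <= t) by (simpl; nra).
  assert (sin t >= 5*t/6) by lra.
  assert (sqrt 3 * sin t >= 8/5 * sin t).
  { assert ((sqrt 3 - 8/5) * sin t >= 0) by (apply Rle_ge, Rmult_le_pos; lra). lra. }
  apply Rabs_le. split.
  - destruct (Rle_dec (-t) (th - 2*PI/3)) as [h|h]; [exact h|exfalso].
    assert (cos (2*(PI/3) - t) < cos th) by (apply cos_decreasing_1; lra).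
    rewrite cos_minus, cos_2PI3, sin_2PI3 in H6.
    pose proof (COS_bound t).
    replace (sqrt 3 / 2 * sin t) with ((sqrt 3 * sin t)/2) in H6 by field. lra.
  - destruct (Rle_dec (th - 2*PI/3) t) as [h|h]; [exact h|exfalso].
    assert (cos th < cos (2*(PI/3) + t)) by (apply cos_decreasing_1; lra).
    rewrite cos_plus, cos_2PI3, sin_2PI3 in H6.
    pose proof (cos_lb2 t ltac:(lra)).
    replace (sqrt 3 / 2 * sin t) with ((sqrt 3 * sin t)/2) in H6 by field. lra.
Qed.

Lemma cos_bounds eps r q m C : 0 <= eps <= 1/6 -> 1 - eps <= r <= 1 -> 1 - eps <= q <= 1 ->
  1 - 2*eps <= m <= 1 + eps -> m^2 = r^2 + q^2 + 2*r*q*C ->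
  -(12/5*eps) <= C + 1/2 <= 4*eps.
Proof.
  intros He Hr Hq Hm E.
  assert (Hrq : (1-eps)^2 <= r*q) by (simpl; nra).
  assert (Hrq0 : 0 < r*q) by nra.
  assert (Hm2u : m^2 <= (1+eps)^2) by (simpl; nra).
  assert (Hm2l : (1-2*eps)^2 <= m^2) by (simpl; nra).
  assert (Hrq2 : r^2 + q^2 - r*q <= 1) by (simpl; nra).
  assert (Hrq3 : r*q <= r^2 + q^2 - r*q) by (pose proof (pow2_ge_0 (r-q)); simpl in *; nra).
  assert (E2 : 2*(r*q)*(C+1/2) = m^2 - (r^2+q^2 - r*q)) by (rewrite E; field).
  split.
  - assert (2*(r*q)*(C+1/2) >= 2*(r*q)*(-(12/5*eps))).
    { rewrite E2. assert (4*eps*(1-eps) <= 24/5*eps*(1-eps)^2).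
      { assert (0 <= eps*(1-eps)*(24/5*(1-eps)-4)) by (apply Rmult_le_pos; [apply Rmult_le_pos|]; lra). simpl. nra. } nra. }
    nra.
  - assert (2*(r*q)*(C+1/2) <= 2*(r*q)*(4*eps)).
    { rewrite E2. assert ((1+eps)^2 <= (1+8*eps)*(1-eps)^2).
      { assert (0 <= eps*(1-4*eps+2*eps^2)) by (apply Rmult_le_pos; simpl; nra). simpl. nra. } nra. }
    nra.
Qed.

Lemma key (eps : R) (alpha beta gamma : C) (a b : R) :
  0 <= eps <= 1 / 6 ->
  1 - eps <= Cmod alpha <= 1 ->
  1 - eps <= Cmod beta <= 1 ->
  1 - eps <= Cmod gamma <= 1 ->
  Cmod (Cplus (Cplus alpha beta) gamma) <= eps ->
  is_arg alpha a -> is_arg beta b ->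
  forall th : R, reduced_angle (a - b) th ->
    Rabs (th - 2 * PI / 3) <= 6 * eps \/ Rabs (th - 4 * PI / 3) <= 6 * eps.
Proof.
  intros He Ha Hb Hg Hs Aa Ab th [Hth [k Hk]].
  assert (Hmu : Cmod (Cplus alpha beta) <= 1 + eps).
  { replace (Cplus alpha beta) with (Cplus (Cplus (Cplus alpha beta) gamma) (Copp gamma)).
    - pose proof (Cmod_triangle (Cplus (Cplus alpha beta) gamma) (Copp gamma)).
      rewrite Cmod_opp in H. lra.
    - destruct alpha, beta, gamma; unfold Cplus, Copp; simpl; f_equal; ring. }
  assert (Hml : 1 - 2*eps <= Cmod (Cplus alpha beta)).
  { pose proof (Cmod_triangle (Cplus (Cplus alpha beta) gamma) (Copp (Cplus alpha beta))).
    rewrite Cmod_opp in H.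
    replace (Cplus (Cplus (Cplus alpha beta) gamma) (Copp (Cplus alpha beta))) with gamma in H.
    - lra.
    - destruct alpha, beta, gamma; unfold Cplus, Copp; simpl; f_equal; ring. }
  assert (Em : Cmod (Cplus alpha beta) ^ 2 = fst (Cplus alpha beta) ^ 2 + snd (Cplus alpha beta) ^ 2).
  { unfold Cmod at 1. rewrite pow2_sqrt; [reflexivity|]. nra. }
  set (m := Cmod (Cplus alpha beta)) in *.
  clearbody m.
  unfold is_arg in Aa, Ab.
  set (r := Cmod alpha) in *. set (q := Cmod beta) in *.
  clearbody r q. rewrite Aa, Ab in Em.
  unfold Cplus in Em; cbn [fst snd] in Em.
  assert (E : m^2 = r^2 + q^2 + 2*r*q*cos th).
  { rewrite Hk, cos_Z, cos_minus, Em.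
    pose proof (sin2_cos2 a). pose proof (sin2_cos2 b). unfold Rsqr in *.
    replace (r^2) with (r^2 * (sin a * sin a + cos a * cos a)) by (rewrite H; ring).
    replace (q^2) with (q^2 * (sin b * sin b + cos b * cos b)) by (rewrite H0; ring).
    ring. }
  pose proof (cos_bounds eps r q m (cos th) He Ha Hb ltac:(lra) E) as Hc.
  pose proof PI_gt3.
  destruct (Rle_dec th PI) as [hp|hp].
  - left. apply cos_near; lra.
  - right. assert (E2 : cos (2*PI - th) = cos th).
    { rewrite cos_minus, cos_2PI, sin_2PI. ring. }
    pose proof (cos_near (2*PI - th) (6*eps) ltac:(lra) ltac:(lra) ltac:(rewrite E2; lra)).
    replace (th - 4*PI/3) with (-(2*PI - th - 2*PI/3)) by field.
    rewrite Rabs_Ropp. exact H0.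
Qed.

Theorem lemma3 (eps : R) (alpha beta gamma : C) (a b c : R) :
  0 <= eps <= 1 / 6 ->
  1 - eps <= Cmod alpha <= 1 ->
  1 - eps <= Cmod beta <= 1 ->
  1 - eps <= Cmod gamma <= 1 ->
  Cmod (Cplus (Cplus alpha beta) gamma) <= eps ->
  is_arg alpha a -> is_arg beta b -> is_arg gamma c ->
  forall th : R,
    (reduced_angle (a - b) th \/ reduced_angle (b - c) th \/ reduced_angle (c - a) th) ->
    Rabs (th - 2 * PI / 3) <= 6 * eps \/ Rabs (th - 4 * PI / 3) <= 6 * eps.
Proof.
  intros He Ha Hb Hg Hs Aa Ab Ac th [H|[H|H]].
  - exact (key eps alpha beta gamma a b He Ha Hb Hg Hs Aa Ab th H).
  - apply (key eps beta gamma alpha b c He Hb Hg Ha); auto.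
    replace (Cplus (Cplus beta gamma) alpha) with (Cplus (Cplus alpha beta) gamma); auto.
    destruct alpha, beta, gamma; unfold Cplus; simpl; f_equal; ring.
  - apply (key eps gamma alpha beta c a He Hg Ha Hb); auto.
    replace (Cplus (Cplus gamma alpha) beta) with (Cplus (Cplus alpha beta) gamma); auto.
    destruct alpha, beta, gamma; unfold Cplus; simpl; f_equal; ring.
Qed.
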